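(* For each positive integer $k$, $R_k\cong R_k^{k+1}$. Explicitly, for $A\in R_k$ and $l=1,\dots,k+1$, let $A_l$ be the $\mathbb{N}\times\mathbb{N}$ matrix whose first column is the $l$-th column of $A$ and whose blocks satisfy $A_l^{m,n}=A^{m,\,n+l+k(n-2)}$ for all $m\ge1$, $n\ge2$; then each $A_l\in R_k$ and the map $A\mapsto (A_1,\dots,A_{k+1})$ is a bijective left-$R_k$-linear map $R_k\to R_k^{k+1}$.
   Context: $\mathbb{N}=\{1,2,3,\dots\}$. $R$ denotes the ring of all $\mathbb{N}\times\mathbb{N}$ integer matrices with only finitely many nonzero entries in each row and each column, with entrywise addition and multiplication $(AB)_{i,j}=\sum_{l\ge1}a_{i,l}b_{l,j}$. Fix a positive integer $k$. Partition $\mathbb{N}$ into consecutive blocks $J_1=\{1\}$ and, for $m\ge2$, $J_m=\{2+k(m-2),\dots,1+k(m-1)\}$. For $A\in R$, the block $A^{m,n}$ is the submatrix with rows indexed by $J_m$ and columns by $J_n$. $R_k$ is the subring of $A\in R$ such that for all but finitely many pairs $(m,n)$ with $m,n\ge2$, $A^{m,n}=cI_k$ for some integer $c$. For a ring $S$, $S^n$ is the free left $S$-module of $n$-tuples with componentwise operations; $S^m\cong S^n$ means there is a bijective left-$S$-linear map $S^m\to S^n$, equivalently there exist $X\in M_{m\times n}(S)$, $Y\in M_{n\times m}(S)$ with $XY=I_m$, $YX=I_n$. *)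

(* Defs.v *)
From mathcomp Require Import all_boot all_order all_algebra.
Set Implicit Arguments. Unset Strict Implicit. Unset Printing Implicit Defensive.
Import GRing.Theory Num.Theory.
Local Open Scope ring_scope.

(* N x N integer matrices, 0-BASED: the paper's entry a_{i,j} (i,j >= 1)
   is stored as A (i-1) (j-1). *)
Definition mat := nat -> nat -> int.

Definition in_R (A : mat) : Prop :=
  (forall i, exists N, forall j, (N <= j)%N -> A i j = 0) /\
  (forall j, exists N, forall i, (N <= i)%N -> A i j = 0).

(* Block J_m (m >= 2) consists of the paper's indices 2+k(m-2),...,1+k(m-1),
   i.e. the 0-based indices 1+k(m-2)+p, p < k; J_1 = {paper index 1} = {0}. *)
Definition blk_start (k m : nat) : nat := (1 + k * (m - 2))%N.

Definition block_scalar (k : nat) (A : mat) (m n : nat) (c : int) : Prop :=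
  forall p q, (p < k)%N -> (q < k)%N ->
    A (blk_start k m + p)%N (blk_start k n + q)%N = (if p == q then c else 0).

(* R_k: for all but finitely many pairs (m,n) with m,n >= 2 (i.e. all pairs
   outside some square [2,M)^2), A^{m,n} is a scalar multiple of I_k. *)
Definition in_Rk (k : nat) (A : mat) : Prop :=
  in_R A /\
  exists M : nat, forall m n, (2 <= m)%N -> (2 <= n)%N ->
    ((M <= m)%N \/ (M <= n)%N) -> exists c : int, block_scalar k A m n c.

Definition mprod (A B C : mat) : Prop :=
  forall i j, exists N, forall M, (N <= M)%N ->
    C i j = \sum_(l < M) A i l * B l j.

Definition madd (A B : mat) : mat := fun i j => A i j + B i j.

(* The matrix A_l, l = 1..k+1 (paper indexing):
   first column = l-th column of A; A_l^{m,n} = A^{m, n+l+k(n-2)} for n >= 2.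
   Column j >= 1 (0-based) of A_l lies in block n = (j-1)/k + 2 at offset
   p = (j-1) %% k; it is column (blk_start k n' + p) of A, n' = n+l+k(n-2). *)
Definition Acomp (k l : nat) (A : mat) : mat :=
  fun i j =>
    if j == 0%N then A i (l - 1)%N
    else
      let n := ((j - 1) %/ k + 2)%N in
      let p := ((j - 1) %% k)%N in
      let n' := (n + l + k * (n - 2))%N in
      A i (blk_start k n' + p)%N.

(* Main.v *)
Require Import Defs.
From mathcomp Require Import all_boot all_order all_algebra.
From mathcomp Require Import zify.
From Stdlib Require Import FunctionalExtensionality.
Local Open Scope ring_scope.

Section Helpers.
Local Open Scope nat_scope.
Set Implicit Arguments. Unset Strict Implicit.

Definition sig k l j := if j == 0 then (l - 1) else
  blk_start k (((j-1)%/k + 2) + l + k*(((j-1)%/k+2) - 2)) + (j-1)%%k.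

Lemma AcompE k l A i j : Acomp k l A i j = A i (sig k l j).
Proof. by rewrite /Acomp /sig; case: (j == 0). Qed.

Lemma dm k t p : p < k -> (k*t+p)%/k = t /\ (k*t+p)%%k = p.
Proof.
move=> hp; have k0 : 0 < k by lia.
by rewrite mulnC divnMDl // divn_small // addn0 modnMDl modn_small.
Qed.

Lemma sigS k l t p : p < k -> sig k l (1 + k*t + p) = 1 + k*(t + l + k*t) + p.
Proof.
move=> hp; rewrite /sig -addnA add1n /= subSS subn0.
case: (dm t hp) => -> ->; rewrite /blk_start.
have -> : t + 2 + l + k * (t + 2 - 2) - 2 = t + l + k*t by lia.
by [].
Qed.

Definition tl k c := if c <= k then c.+1 else ((c-1)%/k - 1) %% k.+1 + 1.
Definition tj k c := if c <= k then 0 else 1 + k * (((c-1)%/k - 1) %/ k.+1) + (c-1)%%k.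

Lemma tau_sig k l j : 0 < k -> 1 <= l <= k.+1 -> tl k (sig k l j) = l /\ tj k (sig k l j) = j.
Proof.
move=> hk /andP[hl1 hl2].
case: j => [|j].
  rewrite /sig /tl /tj /=. have -> : l - 1 <= k by lia. split => //; lia.
have ej := divn_eq j k; have hp := ltn_pmod j hk.
move: ej hp; set t := j %/ k; set p := j %% k => ej hp.
have -> : j.+1 = 1 + k*t + p by lia.
rewrite sigS //.
have hkk : k <= k * (t + l + k*t) by apply: leq_pmulr; lia.
rewrite /tl /tj.
have -> : (1 + k * (t + l + k * t) + p <= k) = false by apply/negbTE; rewrite -ltnNge; lia.
have -> : 1 + k * (t + l + k * t) + p - 1 = k * (t + l + k * t) + p by lia.
case: (dm (t + l + k * t) hp) => -> ->.
have -> : t + l + k * t - 1 = k.+1 * t + (l - 1) by rewrite mulSn; lia.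
have hl' : l - 1 < k.+1 by lia.
case: (dm t hl') => -> ->. split; lia.
Qed.

Lemma sig_tau k c : 0 < k -> sig k (tl k c) (tj k c) = c.
Proof.
move=> hk; rewrite /tl /tj; case: ifP => hc.
  by rewrite /sig /= subn1.
have ec := divn_eq (c-1) k; have hp := ltn_pmod (c-1) hk.
move: ec hp; set q := (c-1) %/ k; set p := (c-1) %% k => ec hp.
have hq : 1 <= q.
  rewrite lt0n; apply/eqP => q0; rewrite q0 mul0n add0n in ec; lia.
have hk1 : 0 < k.+1 by [].
have es := divn_eq (q-1) k.+1; have hr := ltn_pmod (q-1) hk1.
move: es hr; set s := (q-1) %/ k.+1; set r := (q-1) %% k.+1 => es hr.
rewrite sigS //.
have e1 : s + (r + 1) + k * s = q by rewrite mulnS in es; rewrite -(subnK hq) es; lia.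
rewrite e1. rewrite mulnC; lia.
Qed.

Lemma tl_range k c : 1 <= tl k c <= k.+1.
Proof.
rewrite /tl; case: ifP => h; first lia.
have := ltn_pmod ((c - 1) %/ k - 1) (ltn0Sn k); lia.
Qed.

Lemma sig_ge k l j : 0 < k -> 1 <= l -> j <= sig k l j.
Proof.
move=> hk hl; case: j => [//|j].
have ej := divn_eq j k; have hp := ltn_pmod j hk.
move: ej hp; set t := j %/ k; set p := j %% k => ej hp.
have -> : j.+1 = 1 + k*t + p by lia.
rewrite sigS //.
have : k * t <= k * (t + l + k * t) by apply: leq_mul => //; lia.
lia.
Qed.

Lemma sig_le k l j N : 0 < k -> l <= k.+1 -> j < N ->
  sig k l j <= 1 + k*(k.+1*N + k.+1) + k.
Proof.
move=> hk hl hj; case: j hj => [|j] hj.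
  rewrite /sig /=; lia.
have ej := divn_eq j k; have hp := ltn_pmod j hk.
move: ej hp; set t := j %/ k; set p := j %% k => ej hp.
have -> : j.+1 = 1 + k*t + p by lia.
rewrite sigS //.
have htk : t <= t * k by apply: leq_pmulr.
have ht : t < N by lia.
have : t + l + k * t <= k.+1 * N + k.+1.
  rewrite mulSn; have : k * t <= k * N by apply: leq_mul => //; lia. lia.
move=> h; have := leq_mul (leqnn k) h; lia.
Qed.

Lemma sig_blk k l n q : 2 <= n -> q < k ->
  sig k l (blk_start k n + q) = blk_start k (n + l + k*(n-2)) + q.
Proof.
move=> hn hq; rewrite /blk_start sigS //.
have -> : n + l + k * (n - 2) - 2 = n - 2 + l + k * (n - 2) by move: (k * (n - 2)) => x; lia.
by [].
Qed.

Lemma common_bound (Q : nat -> nat -> Prop) L :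
  (forall l N N', N <= N' -> Q l N -> Q l N') ->
  (forall l, l < L -> exists N, Q l N) -> exists N, forall l, l < L -> Q l N.
Proof.
move=> hm; elim: L => [|L IH] hE; first by exists 0.
case: IH => [l hl|N hN]; first by apply: hE; lia.
case: (hE L (ltnSn L)) => N' hN'.
exists (maxn N N') => l; rewrite ltnS leq_eqVlt; case/orP => [/eqP ->|hl].
  exact: hm (leq_maxr _ _) hN'.
exact: hm (leq_maxl _ _) (hN l hl).
Qed.

End Helpers.

Theorem mainTheorem4 (k : nat) (hk : (0 < k)%N) :
  (* each A_l lies in R_k *)
  (forall A, in_Rk k A -> forall l, (1 <= l <= k.+1)%N -> in_Rk k (Acomp k l A)) /\
  (* additivity *)
  (forall A B l, Acomp k l (madd A B) = madd (Acomp k l A) (Acomp k l B)) /\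
  (* left R_k-linearity: (B A)_l = B A_l *)
  (forall B A C, in_Rk k B -> in_Rk k A -> mprod B A C ->
     forall l, (1 <= l <= k.+1)%N -> mprod B (Acomp k l A) (Acomp k l C)) /\
  (* injectivity on R_k *)
  (forall A A', in_Rk k A -> in_Rk k A' ->
     (forall l, (1 <= l <= k.+1)%N -> Acomp k l A = Acomp k l A') -> A = A') /\
  (* surjectivity onto R_k^{k+1} *)
  (forall Bs : nat -> mat, (forall l, (1 <= l <= k.+1)%N -> in_Rk k (Bs l)) ->
     exists A, in_Rk k A /\ forall l, (1 <= l <= k.+1)%N -> Acomp k l A = Bs l).
Proof.
split.
  move=> A [[hr hc] [M hM]] l /andP[hl1 hl2]; split; [split|].
  - move=> i; case: (hr i) => N hN; exists N => j hj; rewrite AcompE; apply: hN.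
    exact: leq_trans hj (sig_ge _ hk hl1).
  - move=> j; case: (hc (sig k l j)) => N hN; exists N => i hi; rewrite AcompE; exact: hN.
  - exists M => m n hm hn hmn.
    have hn' : (2 <= n + l + k * (n - 2))%N by lia.
    have hd : (M <= m)%N \/ (M <= n + l + k * (n - 2))%N.
      by case: hmn => h; [left|right; lia].
    case: (hM m _ hm hn' hd) => c hc0; exists c => p q hp hq.
    by rewrite AcompE sig_blk //; exact: hc0.
split.
  move=> A B l; apply: functional_extensionality => i;
    apply: functional_extensionality => j.
  by rewrite /madd !AcompE.
split.
  move=> B A C _ _ hBAC l hl i j.
  case: (hBAC i (sig k l j)) => N hN; exists N => M' hM'.
  rewrite AcompE (hN _ hM'); apply: eq_bigr => x _; by rewrite AcompE.
split.
  move=> A A' _ _ H; apply: functional_extensionality => i;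
    apply: functional_extensionality => c.
  have := f_equal (fun X => X i (tj k c)) (H _ (tl_range k c)).
  by rewrite /= !AcompE sig_tau.
move=> Bs hB.
exists (fun i c => Bs (tl k c) i (tj k c)); split; last first.
  move=> l hl; apply: functional_extensionality => i;
    apply: functional_extensionality => j.
  by rewrite AcompE; case: (tau_sig j hk hl) => -> ->.
split; [split|].
- move=> i.
  pose Q := fun l N => (1<=l<=k.+1)%N -> forall j, (N <= j)%N -> Bs l i j = 0.
  have [N hN] : exists N, forall l, (l < k.+2)%N -> Q l N.
    apply: common_bound.
    + move=> l N N' hNN' hQ hl j hj; apply: hQ => //; exact: leq_trans hNN' hj.
    + move=> l _; case: (boolP (1 <= l <= k.+1)%N) => hl.
        have [[hr _] _] := hB l hl; case: (hr i) => N hN; exists N => _; exact: hN.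
      by exists 0%N => hl'; rewrite hl' in hl.
  exists (1 + k*(k.+1*N + k.+1) + k).+1%N => c hc.
  have htl := tl_range k c.
  apply: (hN (tl k c)) => //; first lia.
  rewrite leqNgt; apply/negP => hlt.
  have := sig_le hk (proj2 (andP htl)) hlt; rewrite sig_tau //; lia.
- move=> c; have [[_ hc] _] := hB _ (tl_range k c).
  case: (hc (tj k c)) => N hN; exists N => i hi; exact: hN.
- pose Q := fun l N => (1<=l<=k.+1)%N ->
     (forall m n, (2<=m)%N -> (2<=n)%N -> ((N<=m)%N \/ (N<=n)%N) ->
        exists c, block_scalar k (Bs l) m n c) /\ (forall r, (N<=r)%N -> Bs l r 0%N = 0).
  have [Mx hMx] : exists N, forall l, (l < k.+2)%N -> Q l N.
    apply: common_bound.
    + move=> l N N' hNN' hQ hl; case: (hQ hl) => h1 h2; split.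
        move=> m n hm hn hmn; apply: h1 => //; case: hmn => h; [left|right]; lia.
      move=> r hr; apply: h2; lia.
    + move=> l _; case: (boolP (1 <= l <= k.+1)%N) => hl.
        have [[_ hc] [M hM]] := hB l hl; case: (hc 0%N) => N0 hN0.
        exists (maxn M N0) => _; split.
          move=> m n hm hn hmn; apply: hM => //; case: hmn => h; [left|right]; lia.
        move=> r hr; apply: hN0; lia.
      by exists 0%N => hl'; rewrite hl' in hl.
  exists (k.+1 * Mx + 3)%N => m n hm hn hmn.
  have hkM : (Mx <= k.+1 * Mx)%N by apply: leq_pmull.
  have [en|hn3] : n = 2%N \/ (3 <= n)%N by lia.
  + subst n; have hmM : (k.+1 * Mx + 3 <= m)%N by case: hmn => h; lia.
    exists 0 => p q hp hq.
    have e : (blk_start k 2 + q = sig k q.+2 0)%N by rewrite /blk_start /sig /=; lia.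
    have hl : (1 <= q.+2 <= k.+1)%N by lia.
    rewrite /= e; case: (tau_sig 0 hk hl) => -> ->.
    have hmk : (m - 2 <= k * (m - 2))%N by apply: leq_pmull.
    rewrite (proj2 (hMx q.+2 _ hl)); first by case: (p == q).
      lia.
    rewrite /blk_start; lia.
  + have ec := divn_eq (n-3)%N k.+1; have hr := ltn_pmod (n-3)%N (ltn0Sn k).
    move: ec hr; set t := ((n-3) %/ k.+1)%N; set r := ((n-3) %% k.+1)%N => ec hr.
    have en : n = (t.+2 + r.+1 + k * (t.+2 - 2))%N.
      have -> : (t.+2 - 2 = t)%N by lia.
      rewrite mulnS in ec; rewrite (mulnC k t); lia.
    have hl : (1 <= r.+1 <= k.+1)%N by lia.
    have [hblk _] := hMx r.+1 (ltac:(lia)) hl.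
    have hd : (Mx <= m)%N \/ (Mx <= t.+2)%N.
      case: hmn => h; [left; lia|right].
      have : (k.+1 * Mx <= n - 3)%N by lia.
      move/(leq_div2r k.+1); rewrite mulKn //; lia.
    case: (hblk m t.+2 hm (ltac:(lia)) hd) => c hc.
    exists c => p q hp hq.
    rewrite /= en -sig_blk //; case: (tau_sig (blk_start k t.+2 + q) hk hl) => -> ->.
    exact: hc.
Qed.
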